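(* Let $G=(V,E)$ be a simple undirected graph, let $E^2=\{\{u,v\}\in\binom{V}{2}:\operatorname{dist}_G(u,v)\le 2\}$, and let $b\ge 0$. Let $F_1$ be the set of $(x,y)\in\mathbb{Z}_+^{E^2}\times\{0,1\}^V$ satisfying (i) $1-y_u-y_v-y_i\le x_{uv}$ for all $\{u,v\}\in E^2\setminus E$ and all $i\in N_G(u)\cap N_G(v)$, (ii) $1-y_u-y_v\le x_{uv}$ for all $\{u,v\}\in E$, and (iii) $\sum_{v\in V}y_v\le b$; and let $F_2$ be the set of $(x,y)\in\mathbb{Z}_+^{E^2}\times\{0,1\}^V$ satisfying (ii), (iii) and (i') $\dfrac{\sum_{i\in N_G(u)\cap N_G(v)}(1-y_i)}{|N_G(u)\cap N_G(v)|}-y_u-y_v\le x_{uv}$ for all $\{u,v\}\in E^2\setminus E$. Then $F_1=F_2$; that is, in the 2-DCNDP formulation the constraints (i) can be replaced by the constraints (i').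
   Context: The 2-DCNDP (2-hop distance-based critical node detection problem) MIP minimizes $\sum_{e\in E^2}x_e$ subject to (i)–(iii), where $y_v=1$ means vertex $v$ is deleted and $x_{uv}=1$ indicates that $u,v$ remain connected by a path of length at most $2$. $N_G(v)$ is the neighbor set of $v$; for $\{u,v\}\in E^2\setminus E$, $N_G(u)\cap N_G(v)\neq\emptyset$. *)

(* Defs.v *)
From HB Require Import structures.
From mathcomp Require Import all_boot all_order all_algebra.
Set Implicit Arguments. Unset Strict Implicit. Unset Printing Implicit Defensive.
Import Order.TTheory GRing.Theory Num.Theory.
Local Open Scope ring_scope.

Section DCNDP.
Variables (T : finType) (e : rel T) (R : realFieldType).

Definition nbhd (v : T) : {set T} := [set i | e v i].

Definition inE2 (p : {set T}) : Prop :=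
  exists u v, [/\ u != v, p = [set u; v] &
    (e u v || [exists i, e u i && e i v])].

Definition inE (p : {set T}) : Prop :=
  exists u v, p = [set u; v] /\ e u v.

(* x : indexed by 2-subsets (only values on E^2 matter); y : 0/1 vector *)
Definition yR (y : T -> bool) (v : T) : R := (y v)%:R.
Definition xR (x : {set T} -> int) (p : {set T}) : R := (x p)%:~R.

Definition common_F (b : R) (x : {set T} -> int) (y : T -> bool) : Prop :=
  (forall p, inE2 p -> (0 <= x p)%R) /\
  (forall u v, e u v -> 1 - yR y u - yR y v <= xR x [set u; v]) /\
  (\sum_(v : T) yR y v <= b).

Definition F1 (b : R) (x : {set T} -> int) (y : T -> bool) : Prop :=
  common_F b x y /\
  (forall u v, u != v -> inE2 [set u; v] -> ~ inE [set u; v] ->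
     forall i, i \in nbhd u :&: nbhd v ->
       1 - yR y u - yR y v - yR y i <= xR x [set u; v]).

Definition F2 (b : R) (x : {set T} -> int) (y : T -> bool) : Prop :=
  common_F b x y /\
  (forall u v, u != v -> inE2 [set u; v] -> ~ inE [set u; v] ->
     (\sum_(i in nbhd u :&: nbhd v) (1 - yR y i)) / #|nbhd u :&: nbhd v|%:R
       - yR y u - yR y v <= xR x [set u; v]).
End DCNDP.

(* Main.v *)
Require Import Defs.
From HB Require Import structures.
From mathcomp Require Import all_boot all_order all_algebra.
From mathcomp Require Import lra.
Import Order.TTheory GRing.Theory Num.Theory.
Local Open Scope ring_scope.

Lemma yR01 (R : realFieldType) (T : finType) (y : T -> bool) v :
  yR R y v = 0 \/ yR R y v = 1.
Proof. by rewrite /yR; case: (y v); [right|left]. Qed.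
Arguments yR01 {R T} y v.

Theorem theorem1 (R : realFieldType) (T : finType) (e : rel T)
  (e_sym : symmetric e) (e_irr : irreflexive e) (b : R) (hb : 0 <= b)
  (x : {set T} -> int) (y : T -> bool) :
  F1 e b x y <-> F2 e b x y.
Proof.
have xpos : forall p, common_F e b x y -> inE2 e p -> 0 <= xR R x p.
  by move=> p [h _] /h; rewrite /xR ler0z.
split=> -[C H]; split=> // u v uv E2 nE.
- set S := nbhd e u :&: nbhd e v.
  have x0 := xpos _ C E2.
  set c := _ / _.
  have c1 : c <= 1.
    rewrite /c; have [->|cpos] := eqVneq (#|S|%:R : R) 0.
      by rewrite invr0 mulr0 ler01.
    have cp : (0 : R) < #|S|%:R by rewrite lt0r cpos ler0n.
    rewrite ler_pdivrMr // mul1r (_ : #|S|%:R = \sum_(j in S) (1:R)); last by rewrite sumr_const.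
    apply: ler_sum; move=> j _; case: (yR01 (R:=R) y j) => ->; rewrite ?subr0 ?subrr ?ler01 //.
  case: (boolP [exists j in S, ~~ y j]) => [/existsP [j /andP [jS yj]]|/existsPn hn].
    have := H u v uv E2 nE j jS.
    have -> : yR R y j = 0 by rewrite /yR (negbTE yj).
    have := yR01 (R:=R) y u; have := yR01 (R:=R) y v; lra.
  have -> : c = 0.
    rewrite /c big1 ?mul0r // => j jS.
    have := hn j; rewrite jS /= negbK => yj.
    by rewrite /yR yj subrr.
  have := yR01 (R:=R) y u; have := yR01 (R:=R) y v; lra.
- move=> i iS.
  set S := nbhd e u :&: nbhd e v.
  have x0 := xpos _ C E2.
  have := H u v uv E2 nE.
  case: (yR01 (R:=R) y i) => yi; rewrite yi; last first.
    by move=> _; have := yR01 (R:=R) y u; have := yR01 (R:=R) y v; lra.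
  set c := _ / _ => hc.
  have cpos : 0 < c.
    rewrite /c divr_gt0 //; last first.
      by rewrite ltr0n; apply/card_gt0P; exists i.
    rewrite (bigD1 i) //= yi subr0.
    apply: (lt_le_trans ltr01); rewrite lerDl sumr_ge0 // => j _.
    by case: (yR01 (R:=R) y j) => ->; rewrite ?subr0 ?subrr ?ler01.
  have key : 0 < xR R x [set u; v] -> 1 <= xR R x [set u; v].
    by rewrite /xR ltr0z ler1z.
  have key2 : xR R x [set u; v] <= 0 \/ 1 <= xR R x [set u; v].
    by case: (lerP (xR R x [set u; v]) 0) => h; [left|right; apply: key].
  move: hc x0 cpos; case: key2 => k2.
    all: case: (yR01 (R:=R) y u) => ->; case: (yR01 (R:=R) y v) => ->; lra.
  Qed.
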